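(* Let $\Omega$ be an infinite set, $w:\Omega\to\mathbb R^{+}$ a function with strictly positive values, and $I$ a fine ideal of $\mathfrak F=\mathfrak F(\mathcal P_{fin}(\Omega),\mathbb R)$. Let $\mathcal R_I=\mathfrak F/I$ and $J_I:\mathfrak F\to\mathcal R_I$, $J_I(\varphi)=\varphi+I$, the canonical projection. For $A\subseteq\Omega$ and $u:A\to\mathbb R$ put $\sum_{\omega\in A}u(\omega):=J_I\big(\lambda\mapsto\sum_{\omega\in A\cap\lambda}u(\omega)\big)$, and define $$P_I(A)=\frac{\sum_{\omega\in A}w(\omega)}{\sum_{\omega\in\Omega}w(\omega)}.$$ Then $\mathcal R_I$ is a superreal field (with $\mathbb R$ embedded via constant functions), and $(\Omega,P_I,J_I)$ is a NAP-space, i.e. it satisfies (NAP0)–(NAP4).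
   Context: $\mathcal P_{fin}(\Omega)$ denotes the set of finite subsets of $\Omega$, and $\mathfrak F(\mathcal P_{fin}(\Omega),\mathbb R)$ the real algebra of all functions $\mathcal P_{fin}(\Omega)\to\mathbb R$ with pointwise operations. For $\omega\in\Omega$, $\chi_\lambda(\omega)=1$ if $\omega\in\lambda$ and $0$ otherwise. An ideal $I$ of $\mathfrak F$ is fine if it is maximal and, for every $\omega\in\Omega$, $\lambda\mapsto1-\chi_\lambda(\omega)$ belongs to $I$. A superreal field is an ordered field containing $\mathbb R$ as an ordered subfield. The NAP axioms for a triple $(\Omega,P,J)$ with $P:\mathcal P(\Omega)\to\mathcal R$ ($\mathcal R$ a superreal field) and $J:\mathfrak F\to\mathcal R$ an algebra homomorphism are: (NAP0) $P$ is defined on all of $\mathcal P(\Omega)$ with values in the superreal field $\mathcal R$; (NAP1) $P(A)\ge0$; (NAP2) $P(A)=1$ iff $A=\Omega$; (NAP3) $P(A\cup B)=P(A)+P(B)$ when $A\cap B=\varnothing$; (NAP4) with $P(A\mid B)=P(A\cap B)/P(B)$ for $B\ne\varnothing$, $P(A\mid\lambda)\in\mathbb R$ for all nonempty finite $\lambda$ and all $A$, and $P(A)=J(\varphi_A)$ where $\varphi_A(\lambda)=P(A\mid\lambda)$ for nonempty finite $\lambda$ ($\varphi_A(\varnothing)$ arbitrary). *)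

(* Defs.v *)
From Stdlib Require Import Reals List Classical ClassicalEpsilon
  FunctionalExtensionality PropExtensionality.
Open Scope R_scope.

Definition Pfin (Omega : Type) : Type :=
  { S : Omega -> Prop | exists l : list Omega, NoDup l /\ forall x, S x <-> In x l }.

Definition Fun (Omega : Type) : Type := Pfin Omega -> R.

Definition infinite_type (Omega : Type) : Prop :=
  ~ exists l : list Omega, forall x, In x l.

Definition chi {Omega : Type} (lam : Pfin Omega) (w : Omega) : R :=
  if excluded_middle_informative (proj1_sig lam w) then 1 else 0.

Definition is_ideal {Omega : Type} (K : Fun Omega -> Prop) : Prop :=
  K (fun _ => 0) /\
  (forall f g, K f -> K g -> K (fun l => f l + g l)) /\
  (forall f g, K f -> K (fun l => g l * f l)).

Definition is_maximal_ideal {Omega : Type} (I : Fun Omega -> Prop) : Prop :=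
  is_ideal I /\ ~ I (fun _ => 1) /\
  (forall K : Fun Omega -> Prop, is_ideal K -> (forall f, I f -> K f) ->
     (forall f, K f -> I f) \/ (forall f, K f)).

Definition is_fine_ideal {Omega : Type} (I : Fun Omega -> Prop) : Prop :=
  is_maximal_ideal I /\ forall w : Omega, I (fun lam => 1 - chi lam w).

Definition Quot {Omega : Type} (I : Fun Omega -> Prop) : Type :=
  { C : Fun Omega -> Prop |
    exists phi : Fun Omega, C = (fun psi => I (fun l => psi l - phi l)) }.

Definition JI {Omega : Type} (I : Fun Omega -> Prop) (phi : Fun Omega) : Quot I :=
  exist _ (fun psi => I (fun l => psi l - phi l)) (ex_intro _ phi eq_refl).

Definition rep {Omega : Type} {I : Fun Omega -> Prop} (x : Quot I) : Fun Omega :=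
  proj1_sig (constructive_indefinite_description _ (proj2_sig x)).

Definition Qzero {Omega} (I : Fun Omega -> Prop) : Quot I := JI I (fun _ => 0).
Definition Qone {Omega} (I : Fun Omega -> Prop) : Quot I := JI I (fun _ => 1).
Definition Qadd {Omega} {I : Fun Omega -> Prop} (x y : Quot I) : Quot I :=
  JI I (fun l => rep x l + rep y l).
Definition Qmul {Omega} {I : Fun Omega -> Prop} (x y : Quot I) : Quot I :=
  JI I (fun l => rep x l * rep y l).
Definition Qopp {Omega} {I : Fun Omega -> Prop} (x : Quot I) : Quot I :=
  JI I (fun l => - rep x l).
Definition Qemb {Omega} (I : Fun Omega -> Prop) (r : R) : Quot I := JI I (fun _ => r).
(** Multiplicative inverse (a chosen one if it exists, 0 otherwise). *)
Definition Qinv {Omega} {I : Fun Omega -> Prop} (x : Quot I) : Quot I :=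
  match excluded_middle_informative (exists y, Qmul x y = Qone I) with
  | left h => proj1_sig (constructive_indefinite_description _ h)
  | right _ => Qzero I
  end.
Definition Qdiv {Omega} {I : Fun Omega -> Prop} (x y : Quot I) : Quot I :=
  Qmul x (Qinv y).

Definition is_field {Q : Type} (z o : Q) (add mul : Q -> Q -> Q) (opp : Q -> Q) : Prop :=
  (forall x y k, add x (add y k) = add (add x y) k) /\
  (forall x y, add x y = add y x) /\
  (forall x, add z x = x) /\
  (forall x, add x (opp x) = z) /\
  (forall x y k, mul x (mul y k) = mul (mul x y) k) /\
  (forall x y, mul x y = mul y x) /\
  (forall x, mul o x = x) /\
  (forall x y k, mul x (add y k) = add (mul x y) (mul x k)) /\
  z <> o /\
  (forall x, x <> z -> exists y, mul x y = o).

Definition is_ordered_field {Q : Type} (z o : Q) (add mul : Q -> Q -> Q) (opp : Q -> Q)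
  (le : Q -> Q -> Prop) : Prop :=
  is_field z o add mul opp /\
  (forall x, le x x) /\
  (forall x y, le x y -> le y x -> x = y) /\
  (forall x y k, le x y -> le y k -> le x k) /\
  (forall x y, le x y \/ le y x) /\
  (forall x y k, le x y -> le (add x k) (add y k)) /\
  (forall x y, le z x -> le z y -> le z (mul x y)).

Definition is_superreal_field {Q : Type} (z o : Q) (add mul : Q -> Q -> Q) (opp : Q -> Q)
  (le : Q -> Q -> Prop) (emb : R -> Q) : Prop :=
  is_ordered_field z o add mul opp le /\
  emb 0 = z /\ emb 1 = o /\
  (forall r s, emb (r + s) = add (emb r) (emb s)) /\
  (forall r s, emb (r * s) = mul (emb r) (emb s)) /\
  (forall r s, r <= s <-> le (emb r) (emb s)).

Definition fsum {Omega : Type} (lam : Pfin Omega) (A : Omega -> Prop) (u : Omega -> R) : R :=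
  fold_right Rplus 0
    (map (fun x => if excluded_middle_informative (A x) then u x else 0)
       (proj1_sig (constructive_indefinite_description _ (proj2_sig lam)))).

Definition Isum {Omega : Type} (I : Fun Omega -> Prop) (A : Omega -> Prop) (u : Omega -> R)
  : Quot I := JI I (fun lam => fsum lam A u).

Definition P_I {Omega : Type} (I : Fun Omega -> Prop) (w : Omega -> R) (A : Omega -> Prop)
  : Quot I := Qdiv (Isum I A w) (Isum I (fun _ => True) w).

Definition Pcond {Omega Q : Type} (mul : Q -> Q -> Q) (inv : Q -> Q)
  (P : (Omega -> Prop) -> Q) (A B : Omega -> Prop) : Q :=
  mul (P (fun x => A x /\ B x)) (inv (P B)).

(** The NAP axioms (NAP1)-(NAP4) for (Omega, P, J); (NAP0) is the typing of
    P together with the superreal-field property of the codomain. *)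
Definition NAP_axioms {Omega Q : Type} (z o : Q) (add mul : Q -> Q -> Q) (inv : Q -> Q)
  (le : Q -> Q -> Prop) (emb : R -> Q)
  (P : (Omega -> Prop) -> Q) (J : Fun Omega -> Q) : Prop :=
  (forall f g, J (fun l => f l + g l) = add (J f) (J g)) /\
  (forall f g, J (fun l => f l * g l) = mul (J f) (J g)) /\
  (forall r f, J (fun l => r * f l) = mul (emb r) (J f)) /\
  J (fun _ => 1) = o /\
  (forall A, le z (P A)) /\
  (forall A, P A = o <-> (forall x, A x)) /\
  (forall A B, (forall x, ~ (A x /\ B x)) -> P (fun x => A x \/ B x) = add (P A) (P B)) /\
  (forall (A : Omega -> Prop) (lam : Pfin Omega), (exists x, proj1_sig lam x) ->
     exists r : R, Pcond mul inv P A (proj1_sig lam) = emb r) /\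
  (forall (A : Omega -> Prop) (phi : Fun Omega),
     (forall lam : Pfin Omega, (exists x, proj1_sig lam x) ->
        emb (phi lam) = Pcond mul inv P A (proj1_sig lam)) ->
     P A = J phi).

(* Main.v *)
Require Import Defs.
From Stdlib Require Import Reals List Classical ClassicalEpsilon Permutation
  FunctionalExtensionality PropExtensionality Lra Psatz.
Open Scope R_scope.

Definition Lg {Omega} (I : Fun Omega -> Prop) (S : Pfin Omega -> Prop) : Prop :=
  exists f, I f /\ forall l, f l = 0 -> S l.

Lemma I_ext {Omega} (I : Fun Omega -> Prop) (f g : Fun Omega) :
  I f -> (forall l, f l = g l) -> I g.
Proof. intros H E. replace g with f; auto. apply functional_extensionality; auto. Qed.

Lemma L_I {Omega} (I : Fun Omega -> Prop) (HI : is_maximal_ideal I) (g : Fun Omega) :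
  Lg I (fun l => g l = 0) -> I g.
Proof.
  intros [f [Hf Hz]]. destruct HI as [[H0 [Hadd Hmul]] _].
  apply I_ext with (fun l => (if Req_dec_T (f l) 0 then 0 else g l / f l) * f l).
  - apply Hmul; auto.
  - intro l; destruct (Req_dec_T (f l) 0) as [e|n].
    + rewrite (Hz l e); ring.
    + field; auto.
Qed.

Lemma L_mono {Omega} (I : Fun Omega -> Prop) (S T : Pfin Omega -> Prop) :
  Lg I S -> (forall l, S l -> T l) -> Lg I T.
Proof. intros [f [Hf Hz]] H; exists f; split; auto. Qed.

Lemma L_and {Omega} (I : Fun Omega -> Prop) (HI : is_maximal_ideal I) (S T : Pfin Omega -> Prop) :
  Lg I S -> Lg I T -> Lg I (fun l => S l /\ T l).
Proof.
  intros [f [Hf Hzf]] [g [Hg Hzg]]. destruct HI as [[H0 [Hadd Hmul]] _].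
  exists (fun l => f l * f l + g l * g l); split.
  - apply Hadd; apply Hmul; auto.
  - intros l e. split; [apply Hzf | apply Hzg]; nra.
Qed.

Lemma L_True {Omega} (I : Fun Omega -> Prop) (HI : is_maximal_ideal I) (S : Pfin Omega -> Prop) :
  (forall l, S l) -> Lg I S.
Proof. intros H. destruct HI as [[H0 _] _]. exists (fun _ => 0); split; auto. Qed.

Lemma L_not_False {Omega} (I : Fun Omega -> Prop) (HI : is_maximal_ideal I) :
  ~ Lg I (fun _ => False).
Proof.
  intros [f [Hf Hz]]. destruct HI as [[H0 [Hadd Hmul]] [H1 _]]. apply H1.
  apply I_ext with (fun l => / f l * f l). apply Hmul; auto.
  intro l. apply Rinv_l. intro e; exact (Hz l e).
Qed.

Lemma L_const {Omega} (I : Fun Omega -> Prop) (HI : is_maximal_ideal I) (P : Prop) :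
  Lg I (fun _ => P) -> P.
Proof.
  intros H. destruct (classic P) as [p|np]; auto. exfalso.
  apply (L_not_False I HI). apply (L_mono I _ _ H). auto.
Qed.

Lemma I_prime {Omega} (I : Fun Omega -> Prop) (HI : is_maximal_ideal I) (f g : Fun Omega) :
  I (fun l => f l * g l) -> I f \/ I g.
Proof.
  intros Hfg. destruct (classic (I f)) as [h|nf]; [left; auto|right].
  destruct HI as [[H0 [Hadd Hmul]] [H1 Hmax]].
  set (K := fun h : Fun Omega => exists a b, I a /\ forall l, h l = a l + b l * f l).
  assert (HK : is_ideal K).
  { split; [|split].
    - exists (fun _ => 0), (fun _ => 0); split; auto. intro; ring.
    - intros h1 h2 [a1 [b1 [Ha1 E1]]] [a2 [b2 [Ha2 E2]]].
      exists (fun l => a1 l + a2 l), (fun l => b1 l + b2 l); split; auto.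
      intro l; rewrite E1, E2; ring.
    - intros h1 h2 [a1 [b1 [Ha1 E1]]].
      exists (fun l => h2 l * a1 l), (fun l => h2 l * b1 l); split; auto.
      intro l; rewrite E1; ring. }
  destruct (Hmax K HK) as [A|A].
  - intros h Hh. exists h, (fun _ => 0); split; auto. intro; ring.
  - exfalso; apply nf, A. exists (fun _ => 0), (fun _ => 1); split; auto. intro; ring.
  - destruct (A (fun _ => 1)) as [a [b [Ha E]]].
    apply I_ext with (fun l => g l * a l + b l * (f l * g l)).
    + apply Hadd; apply Hmul; auto.
    + intro l. replace (g l) with (g l * 1) at 3 by ring. rewrite (E l). ring.
Qed.

Lemma L_or_not {Omega} (I : Fun Omega -> Prop) (HI : is_maximal_ideal I) (S : Pfin Omega -> Prop) :
  Lg I S \/ Lg I (fun l => ~ S l).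
Proof.
  set (a := fun l => if excluded_middle_informative (S l) then 0 else 1).
  destruct (I_prime I HI a (fun l => 1 - a l)) as [H|H].
  - destruct HI as [[H0 _] _]. apply I_ext with (fun _ => 0); auto.
    intro l; unfold a; destruct (excluded_middle_informative (S l)); ring.
  - left; exists a; split; auto. intros l; unfold a.
    destruct (excluded_middle_informative (S l)); auto. intro; lra.
  - right; exists (fun l => 1 - a l); split; auto. intros l; unfold a.
    destruct (excluded_middle_informative (S l)); auto; intro; lra.
Qed.

Lemma Quot_eq {Omega} (I : Fun Omega -> Prop) (x y : Quot I) :
  proj1_sig x = proj1_sig y -> x = y.
Proof. destruct x, y; simpl; intro; subst; f_equal; apply proof_irrelevance. Qed.

Lemma JI_eq_iff {Omega} (I : Fun Omega -> Prop) (HI : is_maximal_ideal I) (f g : Fun Omega) :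
  JI I f = JI I g <-> Lg I (fun l => f l = g l).
Proof.
  split.
  - intro H. apply (f_equal (@proj1_sig _ _)) in H; simpl in H.
    assert (A : I (fun l => f l - f l)).
    { destruct HI as [[H0 _] _]. apply I_ext with (fun _ => 0); auto. intro; ring. }
    pose proof (equal_f H f) as E; simpl in E. rewrite E in A.
    exists (fun l => f l - g l); split; auto. intros; lra.
  - intro H. apply L_mono with (T := fun l => f l - g l = 0) in H; [|intros; lra].
    apply (L_I I HI) in H. destruct HI as [[H0 [Hadd Hmul]] _].
    apply Quot_eq; simpl. apply functional_extensionality; intro psi.
    apply propositional_extensionality; split; intro Hp.
    + apply I_ext with (fun l => (psi l - f l) + (f l - g l)); [apply Hadd; auto|].
      intro; ring.
    + apply I_ext with (fun l => (psi l - g l) + (-1) * (f l - g l)); [apply Hadd; auto|].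
      intro; ring.
Qed.

Lemma rep_JI {Omega} (I : Fun Omega -> Prop) (HI : is_maximal_ideal I) (f : Fun Omega) :
  Lg I (fun l => rep (JI I f) l = f l).
Proof.
  unfold rep. destruct (constructive_indefinite_description _ (proj2_sig (JI I f))) as [phi Hphi].
  simpl in *. pose proof (equal_f Hphi f) as E; simpl in E.
  assert (A : I (fun l => f l - f l)).
  { destruct HI as [[H0 _] _]. apply I_ext with (fun _ => 0); auto. intro; ring. }
  rewrite E in A. exists (fun l => f l - phi l); split; auto. intros; lra.
Qed.

Lemma JI_rep {Omega} (I : Fun Omega -> Prop) (x : Quot I) : JI I (rep x) = x.
Proof.
  apply Quot_eq. unfold rep.
  destruct (constructive_indefinite_description _ (proj2_sig x)) as [phi Hphi].
  simpl. auto.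
Qed.

Lemma Quot_JI {Omega} (I : Fun Omega -> Prop) (x : Quot I) : exists f, x = JI I f.
Proof. exists (rep x); symmetry; apply JI_rep. Qed.

Lemma Qadd_JI {Omega} (I : Fun Omega -> Prop) (HI : is_maximal_ideal I) (f g : Fun Omega) :
  Qadd (JI I f) (JI I g) = JI I (fun l => f l + g l).
Proof.
  unfold Qadd; apply JI_eq_iff; auto.
  apply (L_mono _ _ _ (L_and I HI _ _ (rep_JI I HI f) (rep_JI I HI g))).
  intros l [e1 e2]; rewrite e1, e2; auto.
Qed.

Lemma Qmul_JI {Omega} (I : Fun Omega -> Prop) (HI : is_maximal_ideal I) (f g : Fun Omega) :
  Qmul (JI I f) (JI I g) = JI I (fun l => f l * g l).
Proof.
  unfold Qmul; apply JI_eq_iff; auto.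
  apply (L_mono _ _ _ (L_and I HI _ _ (rep_JI I HI f) (rep_JI I HI g))).
  intros l [e1 e2]; rewrite e1, e2; auto.
Qed.

Lemma Qopp_JI {Omega} (I : Fun Omega -> Prop) (HI : is_maximal_ideal I) (f : Fun Omega) :
  Qopp (JI I f) = JI I (fun l => - f l).
Proof.
  unfold Qopp; apply JI_eq_iff; auto.
  apply (L_mono _ _ _ (rep_JI I HI f)). intros l e1; rewrite e1; auto.
Qed.

Lemma Qinv_JI {Omega} (I : Fun Omega -> Prop) (HI : is_maximal_ideal I) (f : Fun Omega) :
  Qinv (JI I f) = JI I (fun l => / f l).
Proof.
  unfold Qinv. destruct (excluded_middle_informative _) as [h|h].
  - destruct (constructive_indefinite_description _ h) as [y Hy]; simpl.
    destruct (Quot_JI I y) as [g ->]. unfold Qone in Hy.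
    rewrite Qmul_JI, JI_eq_iff in Hy; auto. apply JI_eq_iff; auto.
    apply (L_mono _ _ _ Hy). intros l e.
    assert (f l <> 0) by (intro z; rewrite z in e; lra).
    apply Rmult_eq_reg_l with (f l); auto. rewrite e, Rinv_r; auto.
  - unfold Qzero. apply JI_eq_iff; auto.
    destruct (L_or_not I HI (fun l => f l = 0)) as [Z|NZ].
    + apply (L_mono _ _ _ Z). intros l e; rewrite e, Rinv_0; auto.
    + exfalso; apply h. exists (JI I (fun l => / f l)). unfold Qone.
      rewrite Qmul_JI, JI_eq_iff; auto. apply (L_mono _ _ _ NZ).
      intros l e; apply Rinv_r; auto.
Qed.

Definition Qle {Omega} (I : Fun Omega -> Prop) (x y : Quot I) : Prop :=
  Lg I (fun l => rep x l <= rep y l).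

Lemma Qle_JI {Omega} (I : Fun Omega -> Prop) (HI : is_maximal_ideal I) (f g : Fun Omega) :
  Qle I (JI I f) (JI I g) <-> Lg I (fun l => f l <= g l).
Proof.
  unfold Qle. pose proof (L_and I HI _ _ (rep_JI I HI f) (rep_JI I HI g)) as R.
  split; intro H; apply (L_mono _ _ _ (L_and I HI _ _ R H));
    intros l [[e1 e2] e]; rewrite ?e1, ?e2 in *; auto; lra.
Qed.

Ltac qd I x := let f := fresh "f" in destruct (Quot_JI I x) as [f ->].

Lemma superreal {Omega} (I : Fun Omega -> Prop) (HI : is_maximal_ideal I) :
  is_superreal_field (Qzero I) (Qone I) Qadd Qmul Qopp (Qle I) (Qemb I).
Proof.
  unfold Qzero, Qone, Qemb.
  unfold is_superreal_field, is_ordered_field, is_field. repeat split.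
    + intros x y k; qd I x; qd I y; qd I k. rewrite !(Qadd_JI I HI).
      apply JI_eq_iff; auto; apply L_True; auto; intro; ring.
    + intros x y; qd I x; qd I y. rewrite !(Qadd_JI I HI).
      apply JI_eq_iff; auto; apply L_True; auto; intro; ring.
    + intros x; qd I x. rewrite !(Qadd_JI I HI).
      apply JI_eq_iff; auto; apply L_True; auto; intro; ring.
    + intros x; qd I x. rewrite (Qopp_JI I HI), !(Qadd_JI I HI).
      apply JI_eq_iff; auto; apply L_True; auto; intro; ring.
    + intros x y k; qd I x; qd I y; qd I k. rewrite !(Qmul_JI I HI).
      apply JI_eq_iff; auto; apply L_True; auto; intro; ring.
    + intros x y; qd I x; qd I y. rewrite !(Qmul_JI I HI).
      apply JI_eq_iff; auto; apply L_True; auto; intro; ring.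
    + intros x; qd I x. rewrite !(Qmul_JI I HI).
      apply JI_eq_iff; auto; apply L_True; auto; intro; ring.
    + intros x y k; qd I x; qd I y; qd I k. rewrite (Qadd_JI I HI f0 f1), !(Qmul_JI I HI), (Qadd_JI I HI).
      apply JI_eq_iff; auto; apply L_True; auto; intro; ring.
    + intro H. apply JI_eq_iff in H; auto. apply (L_not_False I HI).
      apply (L_mono _ _ _ H); intros; lra.
    + intros x Hx; qd I x. exists (JI I (fun l => / f l)). rewrite (Qmul_JI I HI).
      apply JI_eq_iff; auto.
      destruct (L_or_not I HI (fun l => f l = 0)) as [Z|NZ].
      * exfalso; apply Hx, JI_eq_iff; auto.
      * apply (L_mono _ _ _ NZ); intros l e; apply Rinv_r; auto.
    + intros x; qd I x; apply Qle_JI; auto; apply L_True; auto; intro; lra.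
    + intros x y; qd I x; qd I y; rewrite !(Qle_JI I HI); intros H1 H2.
      apply JI_eq_iff; auto. apply (L_mono _ _ _ (L_and I HI _ _ H1 H2)); intros l []; lra.
    + intros x y k; qd I x; qd I y; qd I k; rewrite !(Qle_JI I HI); intros H1 H2.
      apply (L_mono _ _ _ (L_and I HI _ _ H1 H2)); intros l []; lra.
    + intros x y; qd I x; qd I y; rewrite !(Qle_JI I HI).
      destruct (L_or_not I HI (fun l => f l <= f0 l)) as [A|B]; [left; auto|right].
      apply (L_mono _ _ _ B); intros; lra.
    + intros x y k; qd I x; qd I y; qd I k; rewrite !(Qadd_JI I HI), !(Qle_JI I HI); intros H1.
      apply (L_mono _ _ _ H1); intros; lra.
    + intros x y; qd I x; qd I y; rewrite (Qmul_JI I HI), !(Qle_JI I HI); intros H1 H2.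
      apply (L_mono _ _ _ (L_and I HI _ _ H1 H2)); intros l []. apply Rmult_le_pos; auto.
  + intros r s; rewrite (Qadd_JI I HI); auto.
  + intros r s; rewrite (Qmul_JI I HI); auto.
  + intros H; apply Qle_JI; auto; apply L_True; auto.
  + intros H; apply (Qle_JI I HI (fun _ => r) (fun _ => s)) in H. apply (L_const I HI _ H).
Qed.

Definition enum {Omega} (lam : Pfin Omega) : list Omega :=
  proj1_sig (constructive_indefinite_description _ (proj2_sig lam)).
Lemma enum_spec {Omega} (lam : Pfin Omega) :
  NoDup (enum lam) /\ forall x, proj1_sig lam x <-> In x (enum lam).
Proof. unfold enum; destruct (constructive_indefinite_description _ _); simpl; auto. Qed.

Definition lsum {Omega} (g : Omega -> R) (l : list Omega) := fold_right Rplus 0 (map g l).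
Definition ind {Omega} (A : Omega -> Prop) (u : Omega -> R) x :=
  if excluded_middle_informative (A x) then u x else 0.
Lemma fsum_eq {Omega} (lam : Pfin Omega) A u : fsum lam A u = lsum (ind A u) (enum lam).
Proof. reflexivity. Qed.

Lemma lsum_ext {Omega} (g h : Omega -> R) l :
  (forall x, In x l -> g x = h x) -> lsum g l = lsum h l.
Proof.
  induction l; simpl; intros H; auto. unfold lsum in *; simpl.
  rewrite H, IHl; auto.
Qed.
Lemma lsum_add {Omega} (g h : Omega -> R) l :
  lsum (fun x => g x + h x) l = lsum g l + lsum h l.
Proof. induction l; unfold lsum in *; simpl; [ring|]. rewrite IHl; ring. Qed.
Lemma lsum_nonneg {Omega} (g : Omega -> R) l : (forall x, 0 <= g x) -> 0 <= lsum g l.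
Proof. intros H; induction l; unfold lsum in *; simpl; [lra|]. specialize (H a); lra. Qed.
Lemma lsum_ge {Omega} (g : Omega -> R) l x :
  (forall x, 0 <= g x) -> In x l -> g x <= lsum g l.
Proof.
  intros H; induction l; simpl; [tauto|]. intros [e|i]; unfold lsum in *; simpl.
  - subst. pose proof (lsum_nonneg g l H); unfold lsum in *; lra.
  - specialize (IHl i); specialize (H a); lra.
Qed.
Lemma lsum_perm {Omega} (g : Omega -> R) l l' : Permutation l l' -> lsum g l = lsum g l'.
Proof. induction 1; unfold lsum in *; simpl; try lra. Qed.
Lemma lsum_filter {Omega} (g : Omega -> R) (p : Omega -> bool) l :
  (forall x, p x = false -> g x = 0) -> lsum g l = lsum g (filter p l).
Proof.
  intros H; induction l; simpl; auto. destruct (p a) eqn:E; unfold lsum in *; simpl;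
  rewrite IHl; auto. rewrite (H a E); ring.
Qed.

Lemma fsum_ext {Omega} (lam : Pfin Omega) A B u :
  (forall x, proj1_sig lam x -> (A x <-> B x)) -> fsum lam A u = fsum lam B u.
Proof.
  intros H; rewrite !fsum_eq; apply lsum_ext; intros x Hx.
  apply (proj2 (enum_spec lam)) in Hx. unfold ind.
  destruct (excluded_middle_informative (A x)), (excluded_middle_informative (B x)); auto;
  exfalso; apply (H x Hx) in a || apply (H x Hx) in b; tauto.
Qed.

Lemma fsum_union {Omega} (lam : Pfin Omega) A B u :
  (forall x, ~ (A x /\ B x)) -> fsum lam (fun x => A x \/ B x) u = fsum lam A u + fsum lam B u.
Proof.
  intros H; rewrite !fsum_eq, <- lsum_add; apply lsum_ext; intros x _. unfold ind.
  destruct (excluded_middle_informative (A x \/ B x)), (excluded_middle_informative (A x)),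
    (excluded_middle_informative (B x)); try ring; firstorder.
Qed.

Lemma fsum_nonneg {Omega} (lam : Pfin Omega) A (u : Omega -> R) :
  (forall x, 0 < u x) -> 0 <= fsum lam A u.
Proof.
  intros H; rewrite fsum_eq; apply lsum_nonneg; intro x; unfold ind.
  destruct (excluded_middle_informative (A x)); [specialize (H x)|]; lra.
Qed.

Lemma fsum_gap {Omega} (lam : Pfin Omega) A (u : Omega -> R) x :
  (forall x, 0 < u x) -> proj1_sig lam x -> ~ A x ->
  fsum lam A u + u x <= fsum lam (fun _ => True) u.
Proof.
  intros Hu Hx nA. rewrite !fsum_eq.
  assert (E : lsum (ind (fun _ => True) u) (enum lam) =
              lsum (ind A u) (enum lam) + lsum (ind (fun y => ~ A y) u) (enum lam)).
  { rewrite <- lsum_add; apply lsum_ext; intros y _; unfold ind.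
    destruct (excluded_middle_informative True), (excluded_middle_informative (A y)),
      (excluded_middle_informative (~ A y)); try ring; tauto. }
  rewrite E. assert (ind (fun y => ~ A y) u x <= lsum (ind (fun y => ~ A y) u) (enum lam)).
  { apply lsum_ge. intro y; unfold ind; destruct (excluded_middle_informative (~ A y));
      [specialize (Hu y)|]; lra. apply (enum_spec lam); auto. }
  unfold ind at 1 in H; destruct (excluded_middle_informative (~ A x)); [|tauto]. lra.
Qed.

Lemma fsum_pos {Omega} (lam : Pfin Omega) (u : Omega -> R) x :
  (forall x, 0 < u x) -> proj1_sig lam x -> 0 < fsum lam (fun _ => True) u.
Proof.
  intros Hu Hx. pose proof (fsum_gap lam (fun _ => False) u x Hu Hx (fun f => f)).
  pose proof (fsum_nonneg lam (fun _ => False) u Hu). specialize (Hu x); lra.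
Qed.

Lemma fsum_sub {Omega} (lam mu : Pfin Omega) A u :
  (forall x, proj1_sig lam x -> proj1_sig mu x) ->
  fsum mu (fun x => A x /\ proj1_sig lam x) u = fsum lam A u.
Proof.
  intros Hsub. rewrite !fsum_eq.
  set (p := fun x => if excluded_middle_informative (proj1_sig lam x) then true else false).
  rewrite (lsum_filter _ p).
  2:{ intros x; unfold p, ind. destruct (excluded_middle_informative (proj1_sig lam x)); [discriminate|].
      destruct (excluded_middle_informative _); tauto. }
  destruct (enum_spec lam) as [N1 S1]; destruct (enum_spec mu) as [N2 S2].
  rewrite (lsum_perm _ _ (enum lam)).
  - apply lsum_ext; intros x Hx; apply S1 in Hx; unfold ind.
    destruct (excluded_middle_informative (A x /\ proj1_sig lam x)),
      (excluded_middle_informative (A x)); tauto.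
  - apply NoDup_Permutation; auto. apply NoDup_filter; auto.
    intro x; rewrite filter_In, <- S1, <- S2. unfold p.
    destruct (excluded_middle_informative (proj1_sig lam x)); split; intuition; discriminate.
Qed.

Lemma L_in {Omega} (I : Fun Omega -> Prop) (HI : is_fine_ideal I) x :
  Lg I (fun mu => proj1_sig mu x).
Proof.
  destruct HI as [_ Hf]. exists (fun lam => 1 - chi lam x); split; auto.
  intros l; unfold chi; destruct (excluded_middle_informative (proj1_sig l x)); auto; lra.
Qed.

Lemma L_sub {Omega} (I : Fun Omega -> Prop) (HI : is_fine_ideal I) (lam : Pfin Omega) :
  Lg I (fun mu => forall x, proj1_sig lam x -> proj1_sig mu x).
Proof.
  assert (H : forall l, Lg I (fun mu => forall x, In x l -> proj1_sig mu x)).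
  { induction l.
    - apply L_True. apply HI. simpl; tauto.
    - apply (L_mono _ _ _ (L_and I (proj1 HI) _ _ IHl (L_in I HI a))).
      intros mu [H1 H2] x [e|i]; subst; auto. }
  apply (L_mono _ _ _ (H (enum lam))). intros mu Hm x Hx; apply Hm, enum_spec; auto.
Qed.

Lemma P_I_JI {Omega} (I : Fun Omega -> Prop) (HI : is_maximal_ideal I) w A :
  P_I I w A = JI I (fun l => fsum l A w * / fsum l (fun _ => True) w).
Proof.
  unfold P_I, Qdiv, Isum. rewrite (Qinv_JI I HI), (Qmul_JI I HI). reflexivity.
Qed.

Theorem mainTheorem8 (Omega : Type) (w : Omega -> R) (I : Fun Omega -> Prop)
  (HOmega : infinite_type Omega)
  (Hw : forall x, 0 < w x)
  (HI : is_fine_ideal I) :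
  exists le : Quot I -> Quot I -> Prop,
    is_superreal_field (Qzero I) (Qone I) Qadd Qmul Qopp le (Qemb I) /\
    NAP_axioms (Qzero I) (Qone I) Qadd Qmul Qinv le (Qemb I) (P_I I w) (JI I).
Proof.
  pose proof (proj1 HI) as HM.
  assert (Hx0 : exists x0 : Omega, True).
  { apply NNPP; intro N. apply HOmega. exists nil. intro x. apply N. exists x; auto. }
  destruct Hx0 as [x0 _].
  pose proof (L_in I HI x0) as L0.
  assert (Pc : forall A (lam : Pfin Omega), (exists x, proj1_sig lam x) ->
     Pcond Qmul Qinv (P_I I w) A (proj1_sig lam) =
     Qemb I (fsum lam A w / fsum lam (fun _ => True) w)).
  { intros A lam [x1 H1]. unfold Pcond, Qemb. rewrite !(P_I_JI I HM), (Qinv_JI I HM), (Qmul_JI I HM).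
    apply JI_eq_iff; auto.
    apply (L_mono _ _ _ (L_and I HM _ _ (L_sub I HI lam) L0)). intros mu [Hs Hm].
    rewrite (fsum_sub lam mu A w Hs).
    rewrite (fsum_ext mu (proj1_sig lam) (fun x => True /\ proj1_sig lam x)) by tauto.
    rewrite (fsum_sub lam mu _ w Hs).
    pose proof (fsum_pos mu w x0 Hw Hm). pose proof (fsum_pos lam w x1 Hw H1).
    field; lra. }
  exists (Qle I). split; [apply superreal; auto|].
  unfold NAP_axioms. split; [|split; [|split; [|split; [|split; [|split; [|split; [|split]]]]]]].
  - intros f g; rewrite (Qadd_JI I HM); auto.
  - intros f g; rewrite (Qmul_JI I HM); auto.
  - intros r f; unfold Qemb; rewrite (Qmul_JI I HM); auto.
  - reflexivity.
  - intros A. rewrite (P_I_JI I HM). unfold Qzero. apply Qle_JI; auto. apply L_True; auto.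
    intro l. pose proof (fsum_nonneg l A w Hw). pose proof (fsum_nonneg l (fun _ => True) w Hw).
    destruct (Rle_lt_or_eq_dec _ _ H0) as [h|h].
    + apply Rmult_le_pos; auto. apply Rlt_le, Rinv_0_lt_compat; auto.
    + rewrite <- h, Rinv_0, Rmult_0_r; lra.
  - intros A. rewrite (P_I_JI I HM). unfold Qone. rewrite JI_eq_iff; auto. split.
    + intros H. apply NNPP; intro N. apply not_all_ex_not in N. destruct N as [x nA].
      apply (L_not_False I HM). apply (L_mono _ _ _ (L_and I HM _ _ H (L_in I HI x))).
      intros mu [e Hm]. pose proof (fsum_gap mu A w x Hw Hm nA).
      pose proof (fsum_pos mu w x Hw Hm). specialize (Hw x).
      assert (fsum mu A w = fsum mu A w * / fsum mu (fun _ => True) w * fsum mu (fun _ => True) w)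
        by (field; lra). rewrite e in H2. lra.
    + intros HA. apply (L_mono _ _ _ L0). intros mu Hm.
      rewrite (fsum_ext mu A (fun _ => True)) by (intros; split; auto).
      apply Rinv_r. pose proof (fsum_pos mu w x0 Hw Hm); lra.
  - intros A B Hd. rewrite !(P_I_JI I HM), (Qadd_JI I HM). apply JI_eq_iff; auto.
    apply L_True; auto; intro mu. rewrite fsum_union; auto; ring.
  - intros A lam Hne. eexists; apply Pc; auto.
  - intros A phi H. rewrite (P_I_JI I HM). apply JI_eq_iff; auto.
    apply (L_mono _ _ _ L0). intros mu Hm.
    assert (Hne : exists x, proj1_sig mu x) by (exists x0; auto).
    pose proof (H mu Hne) as E. rewrite (Pc A mu Hne) in E. unfold Qemb in E.
    apply JI_eq_iff in E; auto. apply (L_const I HM) in E. rewrite E. reflexivity.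
Qed.
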